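(* (i) For every $\mathbb G$-stopping time $\hat\sigma$ with values in $[0,T]$ there exists an $\mathbb F$-stopping time $\sigma$ with values in $[0,T]$ such that $\hat X_{\hat\sigma}=\hat X_{\sigma\wedge\vartheta}=\hat X_\sigma$. (ii) For every $\mathbb F$-stopping time $\sigma$ with values in $[0,T]$ there exists an $\mathbb F^\sigma$-optional process $x(\sigma)$ such that $\hat X_\sigma=x_\vartheta(\sigma)$.
   Context: Let $(\Omega,\mathcal G,\mathbb P)$ be a probability space with a filtration $\mathbb F=(\mathcal F_t)$ satisfying the usual conditions, $\vartheta$ a strictly positive finite random time and $\mathbb G$ the progressive enlargement of $\mathbb F$ by $\vartheta$ (smallest right-continuous filtration containing $\mathbb F$ making $\vartheta$ a stopping time). Fix $T>0$. $P,R$ are bounded $\mathbb F$-optional processes and the payoff process is $\hat X=P\mathbb 1_{[\![0,\vartheta[\![}+R_\vartheta\mathbb 1_{[\![\vartheta,\infty[\![}$. For an $\mathbb F$-stopping time $\sigma$, $\mathbb F^\sigma=(\mathcal F_{\sigma\wedge t})_{t\ge0}$ is the stopped filtration, and $x_\vartheta(\sigma)$ denotes the process $x(\sigma)$ evaluated at time $\vartheta$. *)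

(* Defs.v *)
From HB Require Import structures.
From mathcomp Require Import all_boot all_order all_algebra.
From mathcomp Require Import all_classical all_reals all_analysis.
Set Implicit Arguments. Unset Strict Implicit. Unset Printing Implicit Defensive.
Import Order.TTheory GRing.Theory Num.Theory.
Local Open Scope classical_set_scope.
Local Open Scope ring_scope.

Section defs.
Context {d : measure_display} {Omega : measurableType d} {R : realType}.

(* A filtration indexed by [0, +oo): sub-sigma-algebras of the ambient one,
   increasing in time (values at negative times are irrelevant). *)
Definition filtration (F : R -> set (set Omega)) : Prop :=
  [/\ (forall t, 0 <= t -> sigma_algebra setT (F t)),
      (forall t, 0 <= t -> F t `<=` measurable) &
      (forall s t, 0 <= s -> s <= t -> F s `<=` F t)].

Definition right_continuous (F : R -> set (set Omega)) : Prop :=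
  forall t, 0 <= t -> F t = \bigcap_(s in [set s | t < s]) F s.

Definition usual_conditions (P : probability Omega R)
  (F : R -> set (set Omega)) : Prop :=
  [/\ filtration F, right_continuous F &
      (forall N A, measurable N -> P N = 0%E -> A `<=` N -> F 0 A)].

Definition stopping_time (F : R -> set (set Omega)) (tau : Omega -> \bar R)
  : Prop :=
  (forall w, (0 <= tau w)%E) /\
  (forall t, 0 <= t -> F t [set w | (tau w <= t%:E)%E]).

(* progressive enlargement: the smallest right-continuous filtration
   containing F and making theta a stopping time (intersection of all such) *)
Definition prog_enl (F : R -> set (set Omega)) (theta : Omega -> R)
  : R -> set (set Omega) :=
  fun t => [set A | forall H : R -> set (set Omega),
    filtration H -> right_continuous H ->
    (forall s, 0 <= s -> F s `<=` H s) ->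
    stopping_time H (fun w => (theta w)%:E) -> H t A].

Definition F_at (F : R -> set (set Omega)) (tau : Omega -> \bar R)
  : set (set Omega) :=
  [set A | measurable A /\
     forall s, 0 <= s -> F s (A `&` [set w | (tau w <= s%:E)%E])].

Definition stopped_filtration (F : R -> set (set Omega))
  (sigma : Omega -> \bar R) : R -> set (set Omega) :=
  fun t => F_at F (fun w => Order.min (sigma w) t%:E).

Definition optional_sets (F : R -> set (set Omega)) : set (set (Omega * R)) :=
  <<s [set p | 0 <= p.2],
      [set [set p | 0 <= p.2 /\ (tau p.1 <= (p.2)%:E)%E]
         | tau in [set tau | stopping_time F tau]] >>.

Definition optional (F : R -> set (set Omega)) (X : Omega -> R -> R) : Prop :=
  forall B : set R, measurable B ->
    optional_sets F [set p | 0 <= p.2 /\ B (X p.1 p.2)].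

Definition bounded_process (X : Omega -> R -> R) : Prop :=
  exists M : R, forall w t, `|X w t| <= M.

Definition Xhat (Pp Rp : Omega -> R -> R) (theta : Omega -> R)
  (w : Omega) (t : R) : R :=
  if t < theta w then Pp w t else Rp w (theta w).

End defs.

(* Main.v *)
Require Import Defs.
From HB Require Import structures.
From mathcomp Require Import all_boot all_order all_algebra.
From mathcomp Require Import all_classical all_reals all_analysis.
Import Order.TTheory GRing.Theory Num.Theory.
Local Open Scope classical_set_scope.
Local Open Scope ring_scope.
Set Implicit Arguments. Unset Strict Implicit.

Lemma archi_inv (R : realType) (e : R) : 0 < e -> exists N : nat, (N.+1%:R)^-1 < e.
Proof.
move=> e0; exists (Num.truncn (e^-1)).
have := Num.Theory.truncnS_gt (e^-1).
by rewrite invf_plt ?posrE ?ltr0Sn.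
Qed.

Lemma sa_U2 T (D : set T) (G : set (set T)) A B :
  sigma_algebra D G -> G A -> G B -> G (A `|` B).
Proof.
move=> [G0 GC GU] GA GB; rewrite -bigcup2E; apply: GU => -[|[|n]] //=.
Qed.

Lemma sa_T T (G : set (set T)) : sigma_algebra setT G -> G setT.
Proof. by move=> [G0 GC _]; rewrite -(setD0 setT); apply: (GC). Qed.

Lemma sa_I T (G : set (set T)) A B :
  sigma_algebra setT G -> G A -> G B -> G (A `&` B).
Proof.
move=> sG GA GB; have [_ GC _] := sG.
have -> : A `&` B = setT `\` ((setT `\` A) `|` (setT `\` B)).
  by rewrite setDUr !setDD !setTI.
by apply: (GC); apply: (sa_U2 sG); apply: (GC).
Qed.

Lemma sa_D T (G : set (set T)) A B :
  sigma_algebra setT G -> G A -> G B -> G (A `\` B).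
Proof.
move=> sG GA GB; have [_ GC _] := sG.
by rewrite setDE -setTD; apply: sa_I => //; apply: (GC).
Qed.

Lemma sa_const T (G : set (set T)) (P : Prop) :
  sigma_algebra setT G -> G [set _ | P].
Proof.
move=> sG; have [G0 _ _] := sG; have [p|np] := pselect P.
  have -> : [set _ | P] = (setT : set T) by apply/seteqP; split.
  exact: sa_T.
by have -> : [set _ | P] = (set0 : set T) by apply/seteqP; split.
Qed.

Definition qn (R : realType) (n : nat) : R := ratr (odflt 0%R (unpickle n) : rat).

Lemma qn_surj (R : realType) (q : rat) : qn R (pickle q) = ratr q.
Proof. by rewrite /qn pickleK. Qed.

Lemma rat_between (R : realType) (x y : R) : x < y -> exists n, x < qn R n < y.
Proof.
move=> xy; have [q] := rat_in_itvoo xy; rewrite in_itv /= => hq.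
by exists (pickle q); rewrite qn_surj.
Qed.


Lemma st_le d (Omega : measurableType d) (R : realType) (F : R -> set (set Omega)) (s : Omega -> R) :
  filtration F -> (forall w, 0 <= s w) -> (forall u, 0 <= u -> F u [set w | s w <= u]) ->
  forall r u, 0 <= u -> r <= u -> F u [set w | s w <= r].
Proof.
move=> [Fs _ Fm] s0 hs r u u0 ru.
have [r0|r0] := ltP r 0.
  have -> : [set w | s w <= r] = set0.
    by apply/seteqP; split => w //=; move=> h; have := s0 w; rewrite leNgt (le_lt_trans h r0).
  by have [] := Fs u u0.
by apply: (Fm r u r0 ru); apply: hs.
Qed.

Lemma st_meas d (Omega : measurableType d) (R : realType) (F : R -> set (set Omega)) (s : Omega -> R) :
  filtration F -> (forall w, 0 <= s w) -> (forall u, 0 <= u -> F u [set w | s w <= u]) ->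
  forall r, measurable [set w | s w <= r].
Proof.
move=> hF s0 hs r; have [r0|r0] := ltP r 0.
  have -> : [set w | s w <= r] = set0.
    by apply/seteqP; split => w //=; move=> h; have := s0 w; rewrite leNgt (le_lt_trans h r0).
  exact: measurable0.
by have [_ Fm _] := hF; apply: (Fm r r0); apply: hs.
Qed.

Lemma stopE d (Omega : measurableType d) (R : realType) (s : Omega -> R) (t : R) :
  [set w | ((s w)%:E <= t%:E)%E] = [set w | s w <= t].
Proof. by apply/seteqP; split => w /=; rewrite lee_fin. Qed.

Lemma L1 d (Omega : measurableType d) (R : realType) (F : R -> set (set Omega))
  (sg : Omega -> R) (tau : Omega -> \bar R) :
  filtration F -> (forall w, 0 <= sg w) -> (forall u, 0 <= u -> F u [set w | sg w <= u]) ->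
  stopping_time F tau ->
  forall u, 0 <= u -> F u ([set w | (tau w <= (sg w)%:E)%E] `&` [set w | sg w <= u]).
Proof.
move=> hF s0 hs [t0 ht] u u0.
have hF' := hF; case: hF' => [Fs _ Fm].
have sFu := Fs u u0.
pose Y n := [set w | (0 <= qn R n < u) /\ sg w <= qn R n /\ ((qn R n)%:E < tau w)%E].
have FY : forall n, F u (Y n).
  move=> n; have [hq|hq] := pselect (0 <= qn R n < u).
    have -> : Y n = [set w | sg w <= qn R n] `\` [set w | (tau w <= (qn R n)%:E)%E].
      apply/seteqP; split => w /=.
        by move=> [_ [h1 h2]]; split => //; rewrite leNgt h2.
      by move=> [h1 h2]; split => //; split => //; rewrite ltNge; apply/negP.
    case/andP: hq => q0 qu.
    apply: (sa_D sFu).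
      by apply: (st_le hF s0 hs) => //; apply: ltW.
    by apply: (Fm _ _ q0 (ltW qu)); apply: ht.
  have -> : Y n = set0 by apply/seteqP; split => w //= [].
  by case: sFu.
have -> : [set w | (tau w <= (sg w)%:E)%E] `&` [set w | sg w <= u] =
   [set w | sg w <= u] `\` (([set w | sg w <= u] `\` [set w | (tau w <= u%:E)%E]) `|` \bigcup_n Y n).
  apply/seteqP; split => w /=.
    move=> [h1 h2]; split => //; move=> [[_ h3]|[n _ [_ [h4 h5]]]].
      by apply: h3; apply: (le_trans h1); rewrite lee_fin.
    by move: h5; rewrite ltNge (le_trans h1) // lee_fin.
  move=> [h1 h2]; split => //.
  have h3 : (tau w <= u%:E)%E by apply: contra_notP h2 => h; left; split.
  apply: contra_notP h2 => h; right.
  move: h3 h; case E: (tau w) => [r| |].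
  - rewrite lee_fin => ru /negP; rewrite -ltNge lte_fin => sr.
    have [n /andP[q1 q2]] := rat_between sr.
    exists n => //; split; last by split; [exact: ltW|rewrite E lte_fin].
    by apply/andP; split; [exact: (le_trans (s0 w) (ltW q1))|exact: (lt_le_trans q2 ru)].
  - by [].
  - by have := t0 w; rewrite E.
apply: (sa_D sFu); first exact: hs.
apply: (sa_U2 sFu); last by case: sFu => _ _; apply.
apply: (sa_D sFu); first exact: hs.
exact: ht.
Qed.

Lemma min_stop d (Omega : measurableType d) (R : realType) (F : R -> set (set Omega)) (s : Omega -> R) (t : R) :
  filtration F -> (forall u, 0 <= u -> F u [set w | s w <= u]) ->
  forall u, 0 <= u -> F u [set w | Num.min (s w) t <= u].
Proof.
move=> [Fs _ _] hs u u0.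
have -> : [set w | Num.min (s w) t <= u] = [set w | s w <= u] `|` [set _ | t <= u].
  by apply/seteqP; split => w /=; rewrite ge_min => /orP.
apply: (sa_U2 (Fs u u0)); first exact: hs.
exact: (sa_const _ (Fs u u0)).
Qed.

Definition tau' d (Omega : measurableType d) (R : realType) (s : Omega -> R) (tau : Omega -> \bar R) :=
  fun w => if (tau w <= (s w)%:E)%E then tau w else +oo%E.

Lemma tau'E d (Omega : measurableType d) (R : realType) (s : Omega -> R) (tau : Omega -> \bar R) (t : R) :
  [set w | (tau' s tau w <= t%:E)%E] = [set w | (tau w <= (Num.min (s w) t)%:E)%E].
Proof.
apply/seteqP; split => w /=; rewrite /tau' EFin_min le_min; case: ifP => //=.
Qed.

Lemma tau'_stop d (Omega : measurableType d) (R : realType) (F : R -> set (set Omega)) (s : Omega -> R) (tau : Omega -> \bar R) :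
  filtration F -> (forall w, 0 <= s w) -> (forall u, 0 <= u -> F u [set w | s w <= u]) ->
  stopping_time F tau ->
  stopping_time (stopped_filtration F (fun w => (s w)%:E)) (tau' s tau).
Proof.
move=> hF s0 hs htau; have [t0 ht] := htau; split.
  by move=> w; rewrite /tau'; case: ifP => // _; exact: le0y.
move=> t tpos; rewrite /stopped_filtration /F_at /= tau'E.
have sg0 : forall w, 0 <= Num.min (s w) t by move=> w; rewrite le_min s0.
have sgs := min_stop t hF hs.
have hL := L1 hF sg0 sgs htau.
split.
  have [_ Fm _] := hF; apply: (Fm t tpos).
  have -> : [set w | (tau w <= (Num.min (s w) t)%:E)%E] =
    [set w | (tau w <= (Num.min (s w) t)%:E)%E] `&` [set w | Num.min (s w) t <= t].
    apply/seteqP; split => w /=; last by case.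
    by move=> h; split => //; rewrite ge_min lexx orbT.
  exact: hL.
move=> u u0.
have -> : [set w | (Order.min (s w)%:E t%:E <= u%:E)%E] = [set w | Num.min (s w) t <= u].
  by apply/seteqP; split => w /=; rewrite -EFin_min lee_fin.
exact: hL.
Qed.

Lemma tau'P d (Omega : measurableType d) (R : realType) (s : Omega -> R) (tau : Omega -> \bar R) (t : R) w :
  (tau' s tau w <= t%:E)%E = (tau w <= (Num.min (s w) t)%:E)%E.
Proof.
by rewrite /tau' EFin_min le_min; case: ifP => //=.
Qed.

Lemma stopped_opt d (Omega : measurableType d) (R : realType) (F : R -> set (set Omega)) (s : Omega -> R) :
  filtration F -> (forall w, 0 <= s w) -> (forall u, 0 <= u -> F u [set w | s w <= u]) ->
  forall O, optional_sets F O ->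
  optional_sets (stopped_filtration F (fun w => (s w)%:E))
    [set p | 0 <= p.2 /\ O (p.1, Num.min (s p.1) p.2)].
Proof.
move=> hF s0 hs O hO.
pose X := [set O : set (Omega * R) | optional_sets (stopped_filtration F (fun w => (s w)%:E))
    [set p | 0 <= p.2 /\ O (p.1, Num.min (s p.1) p.2)]].
have sX : sigma_algebra [set p : Omega * R | 0 <= p.2] X.
  split.
  - rewrite /X /=.
    have -> : [set p : Omega * R | 0 <= p.2 /\ set0 (p.1, Num.min (s p.1) p.2)] = set0.
      by apply/seteqP; split => p //= [].
    exact: sigma_algebra0.
  - move=> A; rewrite /X /= => hA.
    have -> : [set p : Omega * R | 0 <= p.2 /\ ([set p | 0 <= p.2] `\` A) (p.1, Num.min (s p.1) p.2)] =
      [set p | 0 <= p.2] `\` [set p | 0 <= p.2 /\ A (p.1, Num.min (s p.1) p.2)].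
      apply/seteqP; split => p /=.
        by move=> [h1 [h2 h3]]; split => // -[].
      move=> [h1 h2]; split => //; split; first by rewrite le_min s0.
      by move=> h; apply: h2.
    exact: sigma_algebraCD.
  - move=> A hA; rewrite /X /=.
    have -> : [set p : Omega * R | 0 <= p.2 /\ (\bigcup_k A k) (p.1, Num.min (s p.1) p.2)] =
      \bigcup_k [set p | 0 <= p.2 /\ A k (p.1, Num.min (s p.1) p.2)].
      apply/seteqP; split => p /=.
        by move=> [h1 [k _ h2]]; exists k.
      by move=> [k _ [h1 h2]]; split => //; exists k.
    by apply: sigma_algebra_bigcup => k; exact: hA.
have gX : [set [set p : Omega * R | 0 <= p.2 /\ (tau p.1 <= (p.2)%:E)%E]
         | tau in [set tau | stopping_time F tau]] `<=` X.
  move=> _ [tau htau <-]; rewrite /X /=.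
  have -> : [set p : Omega * R | 0 <= p.2 /\
     [set p : Omega * R | 0 <= p.2 /\ (tau p.1 <= (p.2)%:E)%E] (p.1, Num.min (s p.1) p.2)] =
     [set p | 0 <= p.2 /\ (tau' s tau p.1 <= (p.2)%:E)%E].
    apply/seteqP; split => p /=; rewrite tau'P.
      by move=> [h1 [h2 h3]].
    by move=> [h1 h2]; split => //; split => //; rewrite le_min s0.
  apply: sub_sigma_algebra; exists (tau' s tau) => //.
  exact: tau'_stop.
exact: (smallest_sub sX gX hO).
Qed.

Lemma strict_after d (Omega : measurableType d) (R : realType) (F : R -> set (set Omega)) (s : Omega -> R) :
  filtration F -> (forall w, 0 <= s w) -> (forall u, 0 <= u -> F u [set w | s w <= u]) ->
  optional_sets (stopped_filtration F (fun w => (s w)%:E))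
    [set p | 0 <= p.2 /\ s p.1 < p.2].
Proof.
move=> hF s0 hs.
have -> : [set p : Omega * R | 0 <= p.2 /\ s p.1 < p.2] =
  \bigcup_n [set p | 0 <= p.2 /\ ((s p.1 + (n.+1%:R)^-1)%:E <= (p.2)%:E)%E].
  apply/seteqP; split => p /=.
    move=> [h1 h2]; have [N hN] : exists N : nat, (N.+1%:R)^-1 < p.2 - s p.1 by apply: archi_inv; rewrite subr_gt0. exists N => //; split => //.
    by rewrite lee_fin -lerBrDl; apply: ltW.
  move=> [n _ [h1]]; rewrite lee_fin => h2; split => //.
  by apply: lt_le_trans h2; rewrite ltrDl invr_gt0 ltr0Sn.
apply: sigma_algebra_bigcup => n; apply: sub_sigma_algebra.
exists (fun w => (s w + (n.+1%:R)^-1)%:E) => //.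
split.
  by move=> w; rewrite lee_fin addr_ge0 // invr_ge0 ler0n.
move=> t t0; rewrite /stopped_filtration /F_at /=.
have -> : [set w | ((s w + (n.+1%:R)^-1)%:E <= t%:E)%E] = [set w | s w <= t - (n.+1%:R)^-1].
  by apply/seteqP; split => w /=; rewrite lee_fin lerBrDr.
split; first exact: (st_meas hF s0 hs).
move=> u u0.
have -> : [set w | s w <= t - (n.+1%:R)^-1] `&` [set w | (Order.min (s w)%:E t%:E <= u%:E)%E]
  = [set w | s w <= Num.min (t - (n.+1%:R)^-1) u].
  have hpos : 0 <= (n.+1%:R : R)^-1 by rewrite invr_ge0 ler0n.
  apply/seteqP; split => w /=.
    rewrite -EFin_min lee_fin => -[h1 h2]; rewrite le_min h1 /=.
    have st : s w <= t by apply: (le_trans h1); rewrite lerBlDr lerDl.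
    by move: h2; rewrite (min_idPl st).
  rewrite le_min => /andP[h1 h2]; split => //.
  by rewrite -EFin_min lee_fin ge_min h2.
apply: (st_le hF s0 hs) => //.
by rewrite ge_min lexx orbT.
Qed.

Lemma part2 d (Omega : measurableType d) (R : realType) (F : R -> set (set Omega))
  (theta : Omega -> R) (Pp Rp : Omega -> R -> R) :
  filtration F -> optional F Pp -> optional F Rp ->
  forall s : Omega -> R, (forall w, 0 <= s w) ->
     stopping_time F (fun w => (s w)%:E) ->
     exists x : Omega -> R -> R,
       optional (stopped_filtration F (fun w => (s w)%:E)) x /\
       forall w, Xhat Pp Rp theta w (s w) = x w (theta w).
Proof.
move=> hF oP oR s s0 [_ hs'].
have hs : forall u, 0 <= u -> F u [set w | s w <= u].
  by move=> u u0; rewrite -stopE; apply: hs'.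
exists (fun w t => if s w < t then Pp w (Num.min (s w) t) else Rp w (Num.min (s w) t)).
split; last first.
  by move=> w; rewrite /Xhat; have [h|h] := ltP (s w) (theta w).
move=> B mB.
have hA := strict_after hF s0 hs.
have hP := stopped_opt hF s0 hs (oP B mB).
have hR := stopped_opt hF s0 hs (oR B mB).
set D := [set p : Omega * R | 0 <= p.2].
set A := [set p : Omega * R | 0 <= p.2 /\ s p.1 < p.2] in hA.
set SP := [set p : Omega * R | 0 <= p.2 /\ _] in hP.
set SR := [set p : Omega * R | 0 <= p.2 /\ _] in hR.
have -> : [set p | 0 <= p.2 /\ B (if s p.1 < p.2 then Pp p.1 (Num.min (s p.1) p.2) else Rp p.1 (Num.min (s p.1) p.2))]
  = (D `\` ((D `\` A) `|` (D `\` SP))) `|` (D `\` (A `|` (D `\` SR))).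
  apply/seteqP; split => -[w t]; rewrite /D /A /SP /SR /=;
  (have [t0|t0] := boolP (0 <= t); [have m0 : 0 <= Num.min (s w) t by rewrite le_min s0 t0|]);
  case: ifP => st; rewrite ?t0 ?st;
  (have T1 : is_true true by []); (have F1 : ~ is_true false by []);
  have [?|?] := pselect (B (Pp w (Num.min (s w) t)));
  have [?|?] := pselect (B (Rp w (Num.min (s w) t))); tauto.
have sO : sigma_algebra D (optional_sets (stopped_filtration F (fun w => (s w)%:E))).
  exact: smallest_sigma_algebra.
have [_ sC _] := sO.
apply: (sa_U2 sO).
  by apply: (sC); apply: (sa_U2 sO); apply: (sC).
by apply: (sC); apply: (sa_U2 sO) => //; apply: (sC).
Qed.

Lemma eqI_iff T (A B C : set T) : A `&` C = B `&` C <-> (forall w, C w -> (A w <-> B w)).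
Proof.
split.
  move=> e w cw; split => h.
    have : (A `&` C) w by split.
    by rewrite e => -[].
  have : (B `&` C) w by split.
  by rewrite -e => -[].
move=> h; apply/seteqP; split => w [h1 h2]; split => //; by apply/(h w h2).
Qed.

Lemma sa_bigcap T (G : set (set T)) (A : (set T)^nat) :
  sigma_algebra setT G -> (forall n, G (A n)) -> G (\bigcap_n A n).
Proof.
move=> sG hA; have [_ GC GU] := sG.
have -> : \bigcap_n A n = setT `\` \bigcup_n (setT `\` A n).
  apply/seteqP; split => w /=.
    by move=> h; split => // -[n _ [_ hn]]; apply: hn; apply: h.
  by move=> [_ h] n _; apply: contrapT => hn; apply: h; exists n.
by apply: (GC); apply: (GU) => n; apply: (GC).
Qed.

Lemma inv_le (R : realType) (N k : nat) : (N <= k)%N -> (k.+1%:R : R)^-1 <= (N.+1%:R)^-1.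
Proof. by move=> h; rewrite lef_pV2 ?posrE ?ltr0Sn // ler_nat ltnS. Qed.

Definition HH d (Omega : measurableType d) (R : realType) (F : R -> set (set Omega)) (theta : Omega -> R)
  (t : R) : set (set Omega) :=
  [set A | measurable A /\ exists B, F t B /\ A `&` [set w | t < theta w] = B `&` [set w | t < theta w]].

Lemma HH_filt d (Omega : measurableType d) (R : realType) (F : R -> set (set Omega)) (theta : Omega -> R) :
  filtration F -> filtration (HH F theta).
Proof.
move=> hF; have [Fs Fm Fmono] := hF; split.
- move=> t t0; have sF := Fs t t0; have [F0 FC FU] := sF; split.
  + split; first exact: measurable0.
    by exists set0; split.
  + move=> A [mA [B [FB e]]]; split; first exact: measurableD.
    exists (setT `\` B); split; first by apply: (FC).
    by apply: (proj2 (eqI_iff _ _ _)) => w cw /=; have := (proj1 (eqI_iff _ _ _) e w cw); tauto.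
  + move=> A hA; split; first by apply: bigcupT_measurable => n; case: (hA n).
    have hB' : forall n, exists B, F t B /\
        A n `&` [set w | t < theta w] = B `&` [set w | t < theta w].
      by move=> n; case: (hA n) => _ [B hB]; exists B.
    have [Bf hB] := choice hB'.
    exists (\bigcup_n Bf n); split; first by apply: (FU) => n; case: (hB n).
    apply: (proj2 (eqI_iff _ _ _)) => w cw; split => -[n _ h]; exists n => //.
      by have := proj1 (eqI_iff _ _ _) (proj2 (hB n)) w cw; tauto.
    by have := proj1 (eqI_iff _ _ _) (proj2 (hB n)) w cw; tauto.
- by move=> t t0 A [].
- move=> s t s0 st A [mA [B [FB e]]]; split => //.
  exists B; split; first exact: (Fmono s t s0 st).
  apply: (proj2 (eqI_iff _ _ _)) => w cw; apply: (proj1 (eqI_iff _ _ _) e w).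
  exact: (le_lt_trans st cw).
Qed.

Lemma HH_rc d (Omega : measurableType d) (R : realType) (F : R -> set (set Omega)) (theta : Omega -> R) :
  filtration F -> Defs.right_continuous F -> Defs.right_continuous (HH F theta).
Proof.
move=> hF rcF t t0.
have [_ _ Hmono] := @HH_filt _ _ _ F theta hF.
have [Fs Fm Fmono] := hF.
apply/seteqP; split.
  move=> A hA u /= tu; apply: (Hmono t u t0 (ltW tu)) => //.
move=> A /= hA.
pose sn (n : nat) : R := t + (n.+1%:R)^-1.
have snt : forall n, t < sn n by move=> n; rewrite /sn ltrDl invr_gt0 ltr0Sn.
have hB' : forall n, exists B, F (sn n) B /\
    A `&` [set w | sn n < theta w] = B `&` [set w | sn n < theta w].
  by move=> n; case: (hA (sn n) (snt n)) => _ [B hB]; exists B.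
have [Bf hB] := choice hB'.
split; first by case: (hA (sn 0%N) (snt 0%N)).
exists (\bigcup_m \bigcap_n Bf (n + m)%N); split.
  rewrite (rcF t t0) => u /= tu.
  have [N hN] : exists N : nat, (N.+1%:R)^-1 < u - t by apply: archi_inv; rewrite subr_gt0.
  have u0 : 0 <= u by apply: (le_trans t0 (ltW tu)).
  have -> : \bigcup_m \bigcap_n Bf (n + m)%N = \bigcup_m \bigcap_n Bf (n + (m + N))%N.
    apply/seteqP; split => w /= [m _ h].
      by exists m => // n _; rewrite (addnC m N) addnA; apply: h.
    by exists (m + N)%N.
  have [_ _ FU] := Fs u u0.
  apply: (FU) => m; apply: (sa_bigcap (Fs u u0)) => n.
  have snu : sn (n + (m + N))%N <= u.
    rewrite /sn -lerBrDl; apply: ltW; apply: le_lt_trans hN.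
    by apply: inv_le; rewrite addnA leq_addl.
  apply: (Fmono _ _ _ snu); last by case: (hB (n + (m + N))%N).
  exact: (le_trans t0 (ltW (snt _))).
apply: (proj2 (eqI_iff _ _ _)) => w /= tw.
have [N hN] : exists N : nat, (N.+1%:R)^-1 < theta w - t by apply: archi_inv; rewrite subr_gt0.
have key : forall k, (N <= k)%N -> (A w <-> Bf k w).
  move=> k Nk; apply: (proj1 (eqI_iff _ _ _) (proj2 (hB k)) w).
  rewrite /= /sn -ltrBrDl; apply: le_lt_trans hN; exact: inv_le.
split.
  move=> Aw; exists N => // n _; apply/(key (n + N)%N) => //; exact: leq_addl.
move=> [m _ h]; apply/(key (N + m)%N); first exact: leq_addr.
exact: h.
Qed.

Lemma F_sub_HH d (Omega : measurableType d) (R : realType) (F : R -> set (set Omega)) (theta : Omega -> R) :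
  filtration F -> forall s, 0 <= s -> F s `<=` HH F theta s.
Proof.
move=> [_ Fm _] s s0 A FA; split; first exact: (Fm s s0).
by exists A.
Qed.

Lemma theta_stop_HH d (Omega : measurableType d) (R : realType) (F : R -> set (set Omega)) (theta : Omega -> R) :
  filtration F -> measurable_fun setT theta -> (forall w, 0 < theta w) ->
  stopping_time (HH F theta) (fun w => (theta w)%:E).
Proof.
move=> hF mth th0; split; first by move=> w; rewrite lee_fin ltW.
move=> t t0; rewrite stopE; split.
  have := mth measurableT _ (measurable_itv `]-oo, t]%R).
  rewrite setTI.
  have -> : theta @^-1` `]-oo, t] = [set w | theta w <= t].
    by apply/seteqP; split => w /=; rewrite in_itv.
  by [].
exists set0; split; first by have [Fs _ _] := hF; case: (Fs t t0).
apply/seteqP; split => w /= [h1 h2] //.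
by move: h2; rewrite ltNge h1.
Qed.

Lemma Xhat_min d (Omega : measurableType d) (R : realType) (Pp Rp : Omega -> R -> R) (theta : Omega -> R) w (s : R) :
  Xhat Pp Rp theta w (Num.min s (theta w)) = Xhat Pp Rp theta w s.
Proof.
by rewrite /Xhat; have [h|h] := ltP s (theta w); rewrite ?h ?ltxx.
Qed.

Lemma part1 d (Omega : measurableType d) (R : realType) (F : R -> set (set Omega))
  (theta : Omega -> R) (T : R) (Pp Rp : Omega -> R -> R) :
  filtration F -> Defs.right_continuous F -> measurable_fun setT theta ->
  (forall w, 0 < theta w) -> 0 < T ->
  (forall sh : Omega -> R, (forall w, 0 <= sh w <= T) ->
     stopping_time (prog_enl F theta) (fun w => (sh w)%:E) ->
     exists s : Omega -> R, [/\ (forall w, 0 <= s w <= T),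
       stopping_time F (fun w => (s w)%:E) &
       forall w,
         Xhat Pp Rp theta w (sh w) = Xhat Pp Rp theta w (Num.min (s w) (theta w)) /\
         Xhat Pp Rp theta w (Num.min (s w) (theta w)) = Xhat Pp Rp theta w (s w)]).
Proof.
move=> hF rcF mth th0 T0 sh shT [_ hst].
have [Fs Fm Fmono] := hF.
have hH : forall t, 0 <= t -> HH F theta t [set w | sh w <= t].
  move=> t t0; have := hst t t0; rewrite stopE; apply.
  - exact: HH_filt.
  - exact: HH_rc.
  - exact: F_sub_HH.
  - exact: theta_stop_HH.
have hC' : forall t, exists B, 0 <= t -> F t B /\
    [set w | sh w <= t] `&` [set w | t < theta w] = B `&` [set w | t < theta w].
  move=> t; have [t0|t0] := boolP (0 <= t).
    by have [_ [B hB]] := hH t t0; exists B.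
  by exists set0.
have [C hC] := choice hC'.
pose S w := [set x : R | x = T \/ exists n, 0 <= qn R n /\ x = qn R n /\ C (qn R n) w].
pose s w := inf (S w).
have Sne : forall w, S w !=set0 by move=> w; exists T; left.
have Slb : forall w, lbound (S w) 0.
  by move=> w y [->|[n [h0 [-> _]]]] //; apply: ltW.
have Shl : forall w, has_lbound (S w) by move=> w; exists 0.
have sT : forall w, s w <= T by move=> w; apply: (ge_inf (Shl w)); left.
have s0 : forall w, 0 <= s w by move=> w; apply: lb_le_inf.
have sle : forall w y, S w y -> s w <= y by move=> w y hy; exact: (ge_inf (Shl w)).
have slt : forall r u, 0 <= u -> r <= u -> F u [set w | s w < r].
  move=> r u u0 ru.
  have -> : [set w | s w < r] = [set _ | T < r] `|`
      \bigcup_n [set w | 0 <= qn R n < r /\ C (qn R n) w].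
    apply/seteqP; split => w /=.
      move=> /(inf_lt (Sne w)) [y [->|[n [h0 [-> hc]]]] hy]; first by left.
      by right; exists n => //; rewrite h0 hy.
    move=> [Tr|[n _ [/andP[h0 h1] hc]]].
      exact: (le_lt_trans (sT w) Tr).
    apply: (le_lt_trans _ h1); apply: sle; right; by exists n.
  apply: (sa_U2 (Fs u u0)); first exact: (sa_const _ (Fs u u0)).
  have [_ _ FU] := Fs u u0; apply: (FU) => n.
  have [hq|hq] := pselect (0 <= qn R n < r).
    have -> : [set w | 0 <= qn R n < r /\ C (qn R n) w] = C (qn R n).
      by apply/seteqP; split => w /=; [case|move=> h; split].
    case/andP: hq => q0 qr.
    apply: (Fmono _ _ q0 (ltW (lt_le_trans qr ru))).
    by case: (hC _ q0).
  have -> : [set w | 0 <= qn R n < r /\ C (qn R n) w] = set0 by apply/seteqP; split => w //= [].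
  by case: (Fs u u0).
exists s; split.
- by move=> w; rewrite s0 sT.
- split; first by move=> w; rewrite lee_fin.
  move=> t t0; rewrite stopE (rcF t t0) => u /= tu.
  have [N hN] : exists N : nat, (N.+1%:R)^-1 < u - t by apply: archi_inv; rewrite subr_gt0.
  have u0 : 0 <= u by apply: (le_trans t0 (ltW tu)).
  have -> : [set w | s w <= t] = \bigcap_n [set w | s w < t + ((n + N).+1%:R)^-1].
    apply/seteqP; split => w /=.
      move=> h n _; apply: (le_lt_trans h); by rewrite ltrDl invr_gt0 ltr0Sn.
    move=> h; rewrite leNgt; apply/negP => ts.
    have [k hk] : exists k : nat, (k.+1%:R)^-1 < s w - t by apply: archi_inv; rewrite subr_gt0.
    have := h k I; rewrite /= ltNge => /negP; apply.
    rewrite -lerBrDl; apply: ltW; apply: le_lt_trans hk; apply: inv_le; exact: leq_addr.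
  apply: (sa_bigcap (Fs u u0)) => n; apply: slt => //.
  rewrite -lerBrDl; apply: ltW; apply: le_lt_trans hN; apply: inv_le; exact: leq_addl.
- move=> w; split; last exact: Xhat_min.
  rewrite Xhat_min.
  have [shth|thsh] := ltP (sh w) (theta w).
    suff -> : s w = sh w by [].
    apply/eqP; rewrite eq_le; apply/andP; split; last first.
      apply: lb_le_inf => // y [->|[n [h0 [-> hc]]]]; first by case/andP: (shT w).
      have [qth|thq] := ltP (qn R n) (theta w); last by apply: ltW; apply: lt_le_trans thq.
      have := proj1 (eqI_iff _ _ _) (proj2 (hC _ h0)) w qth.
      by move=> [_ h]; apply: h.
    rewrite leNgt; apply/negP => shs.
    have shm : sh w < Num.min (s w) (theta w) by rewrite lt_min shs shth.
    have [n /andP[q1 q2]] := rat_between shm.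
    have h0 : 0 <= qn R n by apply: le_trans (ltW q1); case/andP: (shT w).
    have : S w (qn R n).
      right; exists n; split => //; split => //.
      have qth : qn R n < theta w by move: q2; rewrite lt_min => /andP[].
      have := proj1 (eqI_iff _ _ _) (proj2 (hC _ h0)) w qth.
      by move=> [h _]; apply: h; apply: ltW.
    move=> /sle; rewrite leNgt; move: q2; rewrite lt_min => /andP[-> _] //.
  have ths : theta w <= s w.
    apply: lb_le_inf => // y [->|[n [h0 [-> hc]]]].
      by apply: (le_trans thsh); case/andP: (shT w).
    rewrite leNgt; apply/negP => qth.
    have := proj2 (proj1 (eqI_iff _ _ _) (proj2 (hC _ h0)) w qth) hc.
    by move=> /=; rewrite leNgt (lt_le_trans qth thsh).
  by rewrite /Xhat ltNge thsh /= ltNge ths.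
Qed.

Unset Implicit Arguments. Set Strict Implicit.

Theorem lemma3p1 (d : measure_display) (Omega : measurableType d)
  (R : realType) (P : probability Omega R) (F : R -> set (set Omega))
  (theta : Omega -> R) (T : R) (Pp Rp : Omega -> R -> R) :
  usual_conditions P F ->
  measurable_fun setT theta ->
  (forall w, 0 < theta w) ->
  0 < T ->
  optional F Pp -> optional F Rp ->
  bounded_process Pp -> bounded_process Rp ->
  (forall sh : Omega -> R, (forall w, 0 <= sh w <= T) ->
     stopping_time (prog_enl F theta) (fun w => (sh w)%:E) ->
     exists s : Omega -> R, [/\ (forall w, 0 <= s w <= T),
       stopping_time F (fun w => (s w)%:E) &
       forall w,
         Xhat Pp Rp theta w (sh w) = Xhat Pp Rp theta w (Num.min (s w) (theta w)) /\
         Xhat Pp Rp theta w (Num.min (s w) (theta w)) = Xhat Pp Rp theta w (s w)])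
  /\
  (forall s : Omega -> R, (forall w, 0 <= s w <= T) ->
     stopping_time F (fun w => (s w)%:E) ->
     exists x : Omega -> R -> R,
       optional (stopped_filtration F (fun w => (s w)%:E)) x /\
       forall w, Xhat Pp Rp theta w (s w) = x w (theta w)).
Proof.
move=> [hF rcF _] mth th0 T0 oP oR _ _; split.
  exact: part1.
move=> s sT hs; apply: (part2 theta hF oP oR) => //.
by move=> w; case/andP: (sT w).
Qed.
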